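(* Let $H(\mathbb{Z})=\langle a,b \mid [a,b]\text{ is central}\rangle$ be the integer Heisenberg group with generating set $S=\{a,b,a^{-1},b^{-1}\}$, and let $B_n$ be the ball of radius $n$ about $e$ in the word metric. There exists $\epsilon>0$ such that for all sufficiently large $n$, $$\epsilon<\frac{\#\{g\in B_n\smallsetminus\{e\}:\kappa(g)=0\}}{\#B_n}<1-\epsilon,$$ and the same two-sided bound holds with the condition $\kappa(g)=0$ replaced by $\kappa(g)>0$, and also with it replaced by $\kappa(g)<0$.
   Context: For a group $G$ with finite generating set $S$ ($S=S^{-1}$, $e\notin S$), $|x|$ denotes the word length of $x\in G$ with respect to $S$, and $B_n=\{g:|g|\le n\}$. For $g\in G$ define $\mathrm{Av}(g)=\frac{1}{|S|}\sum_{a\in S}|a^{-1}ga|$, and for $g\neq e$ define the curvature $\kappa(g)=\frac{|g|-\mathrm{Av}(g)}{|g|}$. *)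

(* Defs.v *)
From HB Require Import structures.
From mathcomp Require Import all_boot all_order all_algebra.
From Stdlib Require Import ClassicalEpsilon.
Set Implicit Arguments. Unset Strict Implicit. Unset Printing Implicit Defensive.
Import Order.TTheory GRing.Theory Num.Theory.

(* Integer Heisenberg group H(Z) = <a,b | [a,b] central>, realized as Z^3 with
   (x,y,z)(x',y',z') = (x+x', y+y', z+z'+x*y'), a = (1,0,0), b = (0,1,0). *)
Definition Heis := (int * int * int)%type.

Definition hmul (g h : Heis) : Heis :=
  let: (x, y, z) := g in let: (x', y', z') := h in
  ((x + x')%R, (y + y')%R, (z + z' + x * y')%R).

Definition hinv (g : Heis) : Heis :=
  let: (x, y, z) := g in ((- x)%R, (- y)%R, (- z + x * y)%R).

Definition he : Heis := (0%R, 0%R, 0%R).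
Definition ha : Heis := (1%R, 0%R, 0%R).
Definition hb : Heis := (0%R, 1%R, 0%R).

Definition S : seq Heis := [:: ha; hb; hinv ha; hinv hb].

Fixpoint ballList (n : nat) : seq Heis :=
  match n with
  | 0 => [:: he]
  | n'.+1 => ballList n' ++ [seq hmul g s | g <- ballList n', s <- S]
  end.

Definition ball (n : nat) : seq Heis := undup (ballList n).

(* Word length |g| = least n with g in B_n (S generates H(Z), so such n exists;
   the fallback 0 is never used). *)
Definition wordlen (g : Heis) : nat :=
  match excluded_middle_informative (exists n, g \in ballList n) with
  | left p => ex_minn p
  | right _ => 0
  end.

Definition Av (g : Heis) : rat :=
  ((\sum_(s <- S) (wordlen (hmul (hinv s) (hmul g s)))%:R) / (size S)%:R)%R.

Definition kappa (g : Heis) : rat :=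
  (((wordlen g)%:R - Av g) / (wordlen g)%:R)%R.

Definition propBall (P : rat -> bool) (n : nat) : rat :=
  ((count (fun g => (g != he) && P (kappa g)) (ball n))%:R / (size (ball n))%:R)%R.

(* Main.v *)
Require Import Defs.
From mathcomp Require Import all_boot all_order all_algebra.
From mathcomp Require Import zify ring lra.
From Stdlib Require Import ClassicalEpsilon.
Import Order.TTheory GRing.Theory Num.Theory.
Local Open Scope ring_scope.

Lemma prod_bound1 (a b k : int) : 0 <= a -> 0 <= b -> a + b <= 2*k - 1 -> a * b <= k*k - k.
Proof.
move=> a0 b0 h.
have [ha|ha] : a <= k - 1 \/ b <= k - 1 by lia.
- have h1 : a * b <= a * (2*k-1-a) by nia.
  have h2 : 0 <= (k - a) * (k - 1 - a) by nia.
  nia.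
- have h1 : a * b <= b * (2*k-1-b) by nia.
  have h2 : 0 <= (k - b) * (k - 1 - b) by nia.
  nia.
Qed.
Lemma prod_bound2 (a b k : int) : 0 <= a -> 0 <= b -> a + b <= 2*k -> a * b <= k*k.
Proof.
move=> a0 b0 h.
have h2 : 0 <= (a - b) * (a - b) by rewrite -expr2 sqr_ge0.
have h3 : 0 <= (2*k - a - b) * (2*k + a + b) by apply: mulr_ge0; lia.
nia.
Qed.

Lemma ballList_S n : ballList n.+1 = ballList n ++ [seq hmul g s | g <- ballList n, s <- S].
Proof. by []. Qed.

Lemma ballList_mono m n g : (m <= n)%N -> g \in ballList m -> g \in ballList n.
Proof.
move=> /subnKC <-; elim: (n - m)%N => [|k IH]; first by rewrite addn0.
by move=> h; rewrite addnS ballList_S mem_cat IH.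
Qed.

Lemma foldl_ball w g n : all (fun s => s \in S) w -> g \in ballList n ->
  foldl hmul g w \in ballList (n + size w).
Proof.
elim: w g n => [|s w IH] g n /=; first by rewrite addn0.
move=> /andP [hs hw] hg; rewrite addnS -addSn; apply: IH => //.
by rewrite ballList_S mem_cat; apply/orP; right; apply/allpairsP; exists (g, s).
Qed.

Lemma wordlen_le g L : g \in ballList L -> (wordlen g <= L)%N.
Proof.
move=> h; rewrite /wordlen; case: excluded_middle_informative => [p|np].
- by case: ex_minnP => m hm; apply.
- by exfalso; apply: np; exists L.
Qed.

Lemma wordlen_ge g L : (forall n, g \in ballList n -> L <= n)%N -> (exists n, g \in ballList n) -> (L <= wordlen g)%N.
Proof.
move=> hL hex; rewrite /wordlen; case: excluded_middle_informative => [p|np //].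
by case: ex_minnP => m hm _; apply: hL.
Qed.

Lemma pow_a (x y z : int) n : foldl hmul (x, y, z) (nseq n ha) = (x + n%:Z, y, z).
Proof.
elim: n x y z => [|n IH] x y z /=; first by congr (_,_,_); lia.
rewrite IH; congr (_,_,_); lia.
Qed.
Lemma pow_A (x y z : int) n : foldl hmul (x, y, z) (nseq n (hinv ha)) = (x - n%:Z, y, z).
Proof.
elim: n x y z => [|n IH] x y z /=; first by congr (_,_,_); lia.
rewrite IH; congr (_,_,_); lia.
Qed.
Lemma pow_b (x y z : int) n : foldl hmul (x, y, z) (nseq n hb) = (x, y + n%:Z, z + n%:Z * x).
Proof.
elim: n x y z => [|n IH] x y z /=; first by congr (_,_,_); lia.
rewrite IH; congr (_,_,_); lia.
Qed.
Lemma pow_B (x y z : int) n : foldl hmul (x, y, z) (nseq n (hinv hb)) = (x, y - n%:Z, z - n%:Z * x).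
Proof.
elim: n x y z => [|n IH] x y z /=; first by congr (_,_,_); lia.
rewrite IH; congr (_,_,_); lia.
Qed.

Lemma construct_mem (x y P Q s : nat) : (y <= P)%N -> (x <= Q)%N -> (1 <= Q)%N -> (s <= P)%N ->
  (x%:Z, y%:Z, ((P * Q)%:Z - s%:Z)%R) \in ballList (2 * (P + Q) - x - y).
Proof.
move=> hy hx hQ hs.
set w := nseq (P - y) (hinv hb) ++ nseq (Q - 1) ha ++ nseq s hb ++ [:: ha] ++ nseq (P - s) hb ++ nseq (Q - x) (hinv ha).
have hw : all (fun s => s \in S) w.
  by rewrite /w !all_cat !all_nseq /= !inE !eqxx /= !orbT.
have hsz : size w = (2 * (P + Q) - x - y)%N.
  rewrite /w !size_cat !size_nseq /=; lia.
have := @foldl_ball w he 0 hw isT.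
rewrite add0n hsz /w !foldl_cat /he pow_B pow_a pow_b /= pow_b pow_A.
match goal with |- is_true (?a \in _) -> _ => have -> : a = (x%:Z, y%:Z, ((P * Q)%:Z - s%:Z)%R) end.
  congr (_,_,_); nia.
done.
Qed.

Lemma construct_z (x y P Q : nat) (z : int) : (y <= P)%N -> (x <= Q)%N -> (1 <= Q)%N ->
  (P * Q)%:Z - P%:Z <= z -> z <= (P * Q)%:Z ->
  (x%:Z, y%:Z, z) \in ballList (2 * (P + Q) - x - y).
Proof.
move=> hy hx hQ h1 h2.
have hs : (absz ((P * Q)%:Z - z) <= P)%N by lia.
have -> : z = (P * Q)%:Z - (absz ((P * Q)%:Z - z))%:Z by lia.
exact: construct_mem.
Qed.

Definition Inv (n : nat) (g : Heis) : Prop :=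
  exists Na NA Nb NB M m : int,
  0 <= Na /\ 0 <= NA /\ 0 <= Nb /\ 0 <= NB /\ g.1.1 = Na - NA /\ g.1.2 = Nb - NB /\
  Na + NA + Nb + NB <= n%:Z /\ m <= 0 /\ 0 <= M /\ m <= g.1.1 /\ g.1.1 <= M /\
  2*(M-m) <= Na + NA + `|g.1.1| /\ g.2 <= Nb*M - NB * m.

Lemma Inv_mono n g : Inv n g -> Inv n.+1 g.
Proof.
move=> [Na [NA [Nb [NB [M [m H]]]]]].
exists Na, NA, Nb, NB, M, m; lia.
Qed.

Lemma Inv_step n g s : Inv n g -> s \in S -> Inv n.+1 (hmul g s).
Proof.
case: g => [[x y] z] [Na [NA [Nb [NB [M [m H]]]]]].
move: H => /= [h1 [h2 [h3 [h4 [h5 [h6 [h7 [h8 [h9 [h10 [h11 [h12 h13]]]]]]]]]]]].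
rewrite !inE => /or4P [] /eqP -> ; rewrite /hmul /hinv /ha /hb /=.
- have [h|h] : x + 1 <= M \/ x = M by lia.
  + exists (Na+1), NA, Nb, NB, M, m; rewrite /=; nia.
  + exists (Na+1), NA, Nb, NB, (M+1), m; rewrite /=; nia.
- exists Na, NA, (Nb+1), NB, M, m; rewrite /=; nia.
- have [h|h] : m <= x - 1 \/ x = m by lia.
  + exists Na, (NA+1), Nb, NB, M, m; rewrite /=; nia.
  + exists Na, (NA+1), Nb, NB, M, (m-1); rewrite /=; nia.
- exists Na, NA, Nb, (NB+1), M, m; rewrite /=; nia.
Qed.

Lemma ballList_cases n g : g \in ballList n.+1 ->
  g \in ballList n \/ exists g' s, g' \in ballList n /\ s \in S /\ g = hmul g' s.
Proof.
have -> : ballList n.+1 = ballList n ++ [seq hmul g s | g <- ballList n, s <- S] by [].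
rewrite mem_cat => /orP [->|]; first by left.
case/allpairsP => [[g' s] /= [h1 h2 ->]]; right; exists g', s; done.
Qed.

Lemma Inv_ball n g : g \in ballList n -> Inv n g.
Proof.
elim: n g => [|n IH] g.
- rewrite inE => /eqP ->; exists 0, 0, 0, 0, 0, 0; rewrite /=; lia.
- move=> /ballList_cases [/IH /Inv_mono //|[g' [s [h1 [h2 ->]]]]].
  exact: Inv_step (IH _ h1) h2.
Qed.

Lemma ball_lower n (x y : nat) (z : int) : (x%:Z, y%:Z, z) \in ballList n ->
  exists a b : int, 0 <= a /\ 0 <= b /\ z <= a * b /\ 2 * (a + b) <= n%:Z + x%:Z + y%:Z.
Proof.
move=> /Inv_ball [Na [NA [Nb [NB [M [m H]]]]]].
move: H => /= [h1 [h2 [h3 [h4 [h5 [h6 [h7 [h8 [h9 [h10 [h11 [h12 h13]]]]]]]]]]]].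
exists Na, Nb; split => //; split => //; split; last by lia.
have e1 : M - m <= Na by lia.
have e2 : NB * (- m) <= Nb * (- m) by apply: ler_wpM2r; lia.
have e3 : Nb * (M - m) <= Nb * Na by apply: ler_wpM2l; lia.
nia.
Qed.

Lemma low1 (k x y : nat) (z : int) : (k * k - k)%:Z < z ->
  forall n, (x%:Z, y%:Z, z) \in ballList n -> (4 * k - x - y <= n)%N.
Proof.
move=> hz n /ball_lower [a [b [ha [hb [hab h2]]]]].
rewrite leqNgt; apply/negP => hn.
have h3 : a + b <= 2 * k%:Z - 1 by lia.
have := @prod_bound1 a b k ha hb h3.
have : (k * k - k)%:Z = k%:Z * k%:Z - k%:Z by rewrite -subzn ?PoszM //; nia.
lia.
Qed.

Lemma low2 (k x y : nat) (z : int) : (k * k)%:Z < z ->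
  forall n, (x%:Z, y%:Z, z) \in ballList n -> (4 * k + 2 - x - y <= n)%N.
Proof.
move=> hz n /ball_lower [a [b [ha [hb [hab h2]]]]].
rewrite leqNgt; apply/negP => hn.
have h3 : a + b <= 2 * k%:Z by lia.
have := @prod_bound2 a b k ha hb h3.
have : (k * k)%:Z = k%:Z * k%:Z by lia.
lia.
Qed.

Lemma up_even (k x y : nat) (z : int) : (1 <= k)%N -> (x <= k)%N -> (y <= k)%N ->
  (k * k - k)%:Z < z -> z <= (k * k)%:Z -> (x%:Z, y%:Z, z) \in ballList (4 * k - x - y).
Proof.
move=> hk hx hy h1 h2.
have := @construct_z x y k k z hy hx hk.
have -> : (2 * (k + k) = 4 * k)%N by lia.
apply; nia.
Qed.

Lemma up_hi (k x y : nat) (z : int) : (1 <= k)%N -> (x <= k)%N -> (y <= k.+1)%N ->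
  (k * k)%:Z < z -> z <= (k * k + k)%:Z -> (x%:Z, y%:Z, z) \in ballList (4 * k + 2 - x - y).
Proof.
move=> hk hx hy h1 h2.
have := @construct_z x y k.+1 k z hy hx hk.
have -> : (2 * (k.+1 + k) = 4 * k + 2)%N by lia.
apply; nia.
Qed.

Lemma up_lo (k x y : nat) (z : int) : (2 <= k)%N -> (x <= k.-1)%N -> (y <= k)%N ->
  ((k - 1) * (k - 1))%:Z < z -> z <= (k * k - k)%:Z -> (x%:Z, y%:Z, z) \in ballList (4 * k - 2 - x - y).
Proof.
move=> hk hx hy h1 h2.
have hk1 : (1 <= k.-1)%N by lia.
have := @construct_z x y k k.-1 z hy hx hk1.
have -> : (2 * (k + k.-1) = 4 * k - 2)%N by lia.
apply; nia.
Qed.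

Lemma conj_a (x y z : int) : hmul (hinv ha) (hmul (x, y, z) ha) = (x, y, z - y).
Proof. rewrite /hmul /hinv /ha /=; congr (_,_,_); lia. Qed.
Lemma conj_b (x y z : int) : hmul (hinv hb) (hmul (x, y, z) hb) = (x, y, z + x).
Proof. rewrite /hmul /hinv /hb /=; congr (_,_,_); lia. Qed.
Lemma conj_A (x y z : int) : hmul (hinv (hinv ha)) (hmul (x, y, z) (hinv ha)) = (x, y, z + y).
Proof. rewrite /hmul /hinv /ha /=; congr (_,_,_); lia. Qed.
Lemma conj_B (x y z : int) : hmul (hinv (hinv hb)) (hmul (x, y, z) (hinv hb)) = (x, y, z - x).
Proof. rewrite /hmul /hinv /hb /=; congr (_,_,_); lia. Qed.

Definition sumconj (x y z : int) : nat :=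
  (wordlen (x, y, (z - y)%R) + wordlen (x, y, (z + x)%R) + wordlen (x, y, (z + y)%R) + wordlen (x, y, (z - x)%R))%N.

Lemma Av_eq (x y z : int) : Av (x, y, z) = (sumconj x y z)%:R / 4%:R.
Proof.
rewrite /Av /S !big_cons big_nil conj_a conj_b conj_A conj_B /sumconj !natrD addr0 !addrA.
by [].
Qed.


Lemma kappa_eq (x y z : int) : (0 < wordlen (x, y, z))%N ->
  kappa (x, y, z) = ((4 * wordlen (x, y, z))%:R - (sumconj x y z)%:R) / (4 * wordlen (x, y, z))%:R.
Proof.
move=> hL; rewrite /kappa Av_eq natrM.
have h0 : (wordlen (x, y, z))%:R != 0 :> rat by rewrite pnatr_eq0 -lt0n.
by field.
Qed.

Lemma kappa_zero (x y z : int) : (0 < wordlen (x, y, z))%N ->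
  sumconj x y z = (4 * wordlen (x, y, z))%N -> kappa (x, y, z) = 0.
Proof. by move=> hL he; rewrite kappa_eq // he subrr mul0r. Qed.

Lemma kappa_pos (x y z : int) : (0 < wordlen (x, y, z))%N ->
  (sumconj x y z < 4 * wordlen (x, y, z))%N -> 0 < kappa (x, y, z).
Proof.
move=> hL hs; rewrite kappa_eq //; apply: divr_gt0; last by rewrite ltr0n; lia.
by rewrite subr_gt0 ltr_nat.
Qed.

Lemma kappa_neg (x y z : int) : (0 < wordlen (x, y, z))%N ->
  (4 * wordlen (x, y, z) < sumconj x y z)%N -> kappa (x, y, z) < 0.
Proof.
move=> hL hs; rewrite kappa_eq //.
rewrite -oppr_gt0 -mulNr; apply: divr_gt0; last by rewrite ltr0n; lia.
by rewrite oppr_gt0 subr_lt0 ltr_nat.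
Qed.

Lemma exists_ball_even (k x y : nat) (z : int) : (1 <= k)%N -> (x <= k)%N -> (y <= k)%N ->
  (k * k - k)%:Z < z -> z <= (k * k + k)%:Z -> exists n, (x%:Z, y%:Z, z) \in ballList n.
Proof.
move=> hk hx hy h1 h2.
have [h3|h3] : z <= (k * k)%:Z \/ (k * k)%:Z < z by lia.
- by exists (4 * k - x - y)%N; apply: up_even.
- by exists (4 * k + 2 - x - y)%N; apply: up_hi => //; lia.
Qed.

Lemma ge_even (k x y : nat) (z : int) : (1 <= k)%N -> (x <= k)%N -> (y <= k)%N ->
  (k * k - k)%:Z < z -> z <= (k * k + k)%:Z -> (4 * k - x - y <= wordlen (x%:Z, y%:Z, z))%N.
Proof.
move=> hk hx hy h1 h2; apply: wordlen_ge.
- by move=> n hn; apply: (@low1 k x y z h1 n hn).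
- apply: (@exists_ball_even k x y z hk hx hy h1 h2).
Qed.

Lemma ge_hi (k x y : nat) (z : int) : (1 <= k)%N -> (x <= k)%N -> (y <= k)%N ->
  (k * k)%:Z < z -> z <= (k * k + k)%:Z -> (4 * k + 2 - x - y <= wordlen (x%:Z, y%:Z, z))%N.
Proof.
move=> hk hx hy h1 h2; apply: wordlen_ge.
- by move=> n hn; apply: (@low2 k x y z h1 n hn).
- have hh : (k * k - k)%:Z <= (k * k)%:Z by rewrite lez_nat leq_subr.
  apply: (@exists_ball_even k x y z) => //; lia.
Qed.

Lemma le_even (k x y : nat) (z : int) : (2 <= k)%N -> (x <= k.-1)%N -> (y <= k)%N ->
  ((k - 1) * (k - 1))%:Z < z -> z <= (k * k)%:Z -> (wordlen (x%:Z, y%:Z, z) <= 4 * k - x - y)%N.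
Proof.
move=> hk hx hy h1 h2; apply: wordlen_le.
have [h3|h3] : z <= (k * k - k)%:Z \/ (k * k - k)%:Z < z by lia.
- apply: (@ballList_mono (4 * k - 2 - x - y)); first lia.
  exact: up_lo.
- apply: up_even => //; lia.
Qed.

Lemma le_lo (k x y : nat) (z : int) : (2 <= k)%N -> (x <= k.-1)%N -> (y <= k)%N ->
  ((k - 1) * (k - 1))%:Z < z -> z <= (k * k - k)%:Z -> (wordlen (x%:Z, y%:Z, z) <= 4 * k - 2 - x - y)%N.
Proof. by move=> hk hx hy h1 h2; apply: wordlen_le; apply: up_lo. Qed.

Section Regions.
Variables (t k x y j : nat).
Hypotheses (ht : (1 <= t)%N) (hk : (5 * t <= k)%N) (hx1 : (t <= x)%N) (hx2 : (x < 2 * t)%N)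
  (hy1 : (t <= y)%N) (hy2 : (y < 2 * t)%N) (hj1 : (1 <= j)%N) (hj2 : (j <= t)%N).

Let hkk : (k <= k * k)%N. Proof. nia. Qed.
Let e1 : ((k - 1) * (k - 1))%:Z = (k * k)%:Z - 2 * k%:Z + 1. Proof. nia. Qed.
Let e2 : (k * k - k)%:Z = (k * k)%:Z - k%:Z. Proof. rewrite -subzn //. Qed.
Let e3 : (k * k + k)%:Z = (k * k)%:Z + k%:Z. Proof. lia. Qed.

Lemma region_pos : 0 < kappa (x%:Z, y%:Z, (k * k)%:Z - k%:Z + j%:Z) /\
  wordlen (x%:Z, y%:Z, (k * k)%:Z - k%:Z + j%:Z) = (4 * k - x - y)%N.
Proof.
set z := (k * k)%:Z - k%:Z + j%:Z.
have hW : wordlen (x%:Z, y%:Z, z) = (4 * k - x - y)%N.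
  apply/eqP; rewrite eqn_leq; apply/andP; split.
  - apply: le_even; rewrite ?e1; lia.
  - apply: ge_even; rewrite ?e2 ?e3; lia.
split => //; apply: kappa_pos; rewrite hW; first lia.
have w1 : (wordlen (x%:Z, y%:Z, (z - x%:Z)%R) <= 4 * k - 2 - x - y)%N.
  apply: le_lo; rewrite ?e1 ?e2; lia.
have w2 : (wordlen (x%:Z, y%:Z, (z + x%:Z)%R) <= 4 * k - x - y)%N.
  apply: le_even; rewrite ?e1; lia.
have w3 : (wordlen (x%:Z, y%:Z, (z + y%:Z)%R) <= 4 * k - x - y)%N.
  apply: le_even; rewrite ?e1; lia.
have w4 : (wordlen (x%:Z, y%:Z, (z - y%:Z)%R) <= 4 * k - x - y)%N.
  apply: le_even; rewrite ?e1; lia.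
rewrite /sumconj; lia.
Qed.

Let exact_W (z : int) : (k * k)%:Z - k%:Z < z -> z <= (k * k)%:Z ->
  wordlen (x%:Z, y%:Z, z) = (4 * k - x - y)%N.
Proof.
move=> h1 h2; apply/eqP; rewrite eqn_leq; apply/andP; split.
- apply: le_even; rewrite ?e1; lia.
- apply: ge_even; rewrite ?e2 ?e3; lia.
Qed.

Lemma region_neg : kappa (x%:Z, y%:Z, (k * k)%:Z + 1 - j%:Z) < 0 /\ wordlen (x%:Z, y%:Z, (k * k)%:Z + 1 - j%:Z) = (4 * k - x - y)%N.
Proof.
set z := (k * k)%:Z + 1 - j%:Z.
have hW : wordlen (x%:Z, y%:Z, z) = (4 * k - x - y)%N by apply: exact_W; lia.
split => //; apply: kappa_neg; rewrite hW; first lia.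
have w1 : (4 * k + 2 - x - y <= wordlen (x%:Z, y%:Z, (z + x%:Z)%R))%N.
  apply: ge_hi; rewrite ?e3; lia.
have w2 : (4 * k - x - y <= wordlen (x%:Z, y%:Z, (z - x%:Z)%R))%N.
  apply: ge_even; rewrite ?e2 ?e3; lia.
have w3 : (4 * k - x - y <= wordlen (x%:Z, y%:Z, (z + y%:Z)%R))%N.
  apply: ge_even; rewrite ?e2 ?e3; lia.
have w4 : (4 * k - x - y <= wordlen (x%:Z, y%:Z, (z - y%:Z)%R))%N.
  apply: ge_even; rewrite ?e2 ?e3; lia.
rewrite /sumconj; lia.
Qed.

Lemma region_zero : kappa (x%:Z, y%:Z, (k * k)%:Z - k%:Z + (2 * t + j)%:Z) = 0 /\ wordlen (x%:Z, y%:Z, (k * k)%:Z - k%:Z + (2 * t + j)%:Z) = (4 * k - x - y)%N.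
Proof.
set z := (k * k)%:Z - k%:Z + (2 * t + j)%:Z.
have hW : wordlen (x%:Z, y%:Z, z) = (4 * k - x - y)%N by apply: exact_W; lia.
split => //; apply: kappa_zero; rewrite hW; first lia.
rewrite /sumconj !exact_W; lia.
Qed.

End Regions.

Lemma zinj (k k' : nat) (a a' : int) : 0 <= a -> a < 2 * k%:Z -> 0 <= a' -> a' < 2 * k'%:Z ->
  (k * k)%:Z - k%:Z + a = (k' * k')%:Z - k'%:Z + a' -> k = k'.
Proof.
move=> h1 h2 h3 h4 he.
have [hlt|hlt|//] := ltngtP k k'.
- have : 0 <= (k'%:Z - k%:Z - 1) * (k'%:Z + k%:Z) by apply: mulr_ge0; lia.
  lia.
- have : 0 <= (k%:Z - k'%:Z - 1) * (k%:Z + k'%:Z) by apply: mulr_ge0; lia.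
  lia.
Qed.

Lemma count_lb (P : pred Heis) (s : seq Heis) (I : eqType) (f : I -> Heis) (idx : seq I) :
  uniq idx -> {in idx &, injective f} -> (forall i, i \in idx -> (f i \in s) && P (f i)) ->
  (size idx <= count P s)%N.
Proof.
move=> hu hinj hin; rewrite -size_filter -(size_map f).
apply: uniq_leq_size; first by rewrite map_inj_in_uniq.
by move=> g /mapP [i hi ->]; rewrite mem_filter andbC; apply: hin.
Qed.

Lemma count3 (a b c : pred Heis) (s : seq Heis) :
  (forall g, ~~ (a g && b g)) -> (forall g, ~~ (a g && c g)) -> (forall g, ~~ (b g && c g)) ->
  (count a s + count b s + count c s <= size s)%N.
Proof.
move=> hab hac hbc; elim: s => [//|g s IH] /=.
move: (hab g) (hac g) (hbc g).
case: (a g); case: (b g); case: (c g) => //= _ _ _; lia.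
Qed.

Definition idx (t : nat) : seq (nat * nat * nat * nat) :=
  [seq (p, j) | p <- [seq (q, y) | q <- [seq (k, x) | k <- iota (5 * t) (5 * t), x <- iota t t],
                                    y <- iota t t], j <- iota 1 t].

Lemma idx_uniq t : uniq (idx t).
Proof.
rewrite /idx; apply: allpairs_uniq; rewrite ?iota_uniq //; last by move=> [? ?] [? ?] _ _ [-> ->].
apply: allpairs_uniq; rewrite ?iota_uniq //; last by move=> [? ?] [? ?] _ _ [-> ->].
apply: allpairs_uniq; rewrite ?iota_uniq //; by move=> [? ?] [? ?] _ _ [-> ->].
Qed.

Lemma idx_size t : size (idx t) = (5 * t * t * t * t)%N.
Proof. by rewrite /idx !size_allpairs !size_iota. Qed.

Lemma idx_mem t k x y j : (((k, x), y), j) \in idx t ->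
  [/\ (5 * t <= k < 10 * t)%N, (t <= x < 2 * t)%N, (t <= y < 2 * t)%N & (1 <= j <= t)%N].
Proof.
rewrite /idx => /allpairsP [[p j1] /= [hp hj [ep ->]]]; subst p.
move: hp => /allpairsP [[q y1] /= [hq hy [eq ->]]]; subst q.
move: hq => /allpairsP [[k1 x1] /= [hk hx [-> ->]]].
move: hk hx hy hj; rewrite !mem_iota => h1 h2 h3 h4; split; lia.
Qed.

Lemma box n g : g \in ballList n -> `|g.1.1| + `|g.1.2| <= n%:Z /\ `|g.2| <= (n * n)%:Z.
Proof.
elim: n g => [|n IH] g.
- by rewrite inE => /eqP ->.
- have e : (n.+1 * n.+1)%:Z = (n * n)%:Z + 2 * n%:Z + 1 by lia.
  rewrite e.
  move=> /ballList_cases [/IH|[g' [s [h1 [h2 ->]]]]]; first lia.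
  move: (IH _ h1); case: g' {h1} => [[x y] z] /= H.
  move: h2; rewrite !inE => /or4P [] /eqP -> ; rewrite /hmul /hinv /ha /hb /=; lia.
Qed.

Definition R (m : nat) : seq int := [seq (i%:Z - m%:Z) | i <- iota 0 (2 * m + 1)].

Lemma inR m v : `|v| <= m%:Z -> v \in R m.
Proof.
move=> h; apply/mapP; exists (absz (v + m%:Z)); rewrite ?mem_iota; lia.
Qed.

Definition boxl (n : nat) : seq Heis :=
  [seq (p, z) | p <- [seq (a, b) | a <- R n, b <- R n], z <- R (n * n)].

Lemma size_ball n : (size (ball n) <= (2 * n + 1) * (2 * n + 1) * (2 * (n * n) + 1))%N.
Proof.
have -> : ((2 * n + 1) * (2 * n + 1) * (2 * (n * n) + 1))%N = size (boxl n).
  by rewrite /boxl !size_allpairs /R !size_map !size_iota.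
apply: uniq_leq_size; first exact: undup_uniq.
move=> g; rewrite mem_undup => /box; case: g => [[x y] z] /= [h1 h2].
apply/allpairsP; exists ((x, y), z) => /=; split => //; last by apply: inR.
apply/allpairsP; exists (x, y) => /=; split => //; apply: inR; lia.
Qed.

Lemma in_ball_n n k x y (z : int) : (1 <= k)%N -> (x <= k)%N -> (y <= k)%N -> (4 * k <= n)%N ->
  (k * k - k)%:Z < z -> z <= (k * k)%:Z -> (x%:Z, y%:Z, z) \in ball n.
Proof.
move=> hk hx hy hn h1 h2; rewrite mem_undup.
apply: (@ballList_mono (4 * k - x - y)); first lia.
exact: up_even.
Qed.

Definition fpos (i : nat * nat * nat * nat) : Heis :=
  let: (((k, x), y), j) := i in (x%:Z, y%:Z, (k * k)%:Z - k%:Z + j%:Z).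
Definition fneg (i : nat * nat * nat * nat) : Heis :=
  let: (((k, x), y), j) := i in (x%:Z, y%:Z, (k * k)%:Z + 1 - j%:Z).
Definition fzero (t : nat) (i : nat * nat * nat * nat) : Heis :=
  let: (((k, x), y), j) := i in (x%:Z, y%:Z, (k * k)%:Z - k%:Z + (2 * t + j)%:Z).

Lemma he_neq (x y : nat) (z : int) : (1 <= x)%N -> (x%:Z, y%:Z, z) != he.
Proof. by move=> hx; rewrite /he; apply/eqP; case; lia. Qed.

Section Counts.
Variables (n t : nat).
Hypotheses (ht : (1 <= t)%N) (hn : (80 * t <= n)%N).

Lemma count_pos : (5 * t * t * t * t <= count (fun g => (g != he) && (0 < kappa g)%R) (ball n))%N.
Proof.
rewrite -(idx_size t); apply: (@count_lb _ _ _ fpos); first exact: idx_uniq.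
- move=> [[[k x] y] j] [[[k' x'] y'] j'] /idx_mem [hk hx hy hj] /idx_mem [hk' hx' hy' hj'] /= [ex ey ez].
  have ekk : k = k' by apply: (@zinj k k' j%:Z j'%:Z); lia.
  subst k'; congr (_, _, _, _); lia.
- move=> [[[k x] y] j] /idx_mem [hk hx hy hj] /=.
  have [hp _] := @region_pos t k x y j ht ltac:(lia) ltac:(lia) ltac:(lia) ltac:(lia) ltac:(lia) ltac:(lia) ltac:(lia).
  rewrite hp he_neq ?andbT; last lia.
  have hkk : (k <= k * k)%N by nia.
  apply: (@in_ball_n n k); rewrite ?(subzn hkk); lia.
Qed.

Lemma count_neg : (5 * t * t * t * t <= count (fun g => (g != he) && (kappa g < 0)%R) (ball n))%N.
Proof.
rewrite -(idx_size t); apply: (@count_lb _ _ _ fneg); first exact: idx_uniq.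
- move=> [[[k x] y] j] [[[k' x'] y'] j'] /idx_mem [hk hx hy hj] /idx_mem [hk' hx' hy' hj'] /= [ex ey ez].
  have ekk : k = k' by apply: (@zinj k k' (k%:Z + 1 - j%:Z) (k'%:Z + 1 - j'%:Z)); lia.
  subst k'; congr (_, _, _, _); lia.
- move=> [[[k x] y] j] /idx_mem [hk hx hy hj] /=.
  have [hp _] := @region_neg t k x y j ht ltac:(lia) ltac:(lia) ltac:(lia) ltac:(lia) ltac:(lia) ltac:(lia) ltac:(lia).
  rewrite hp he_neq ?andbT; last lia.
  have hkk : (k <= k * k)%N by nia.
  apply: (@in_ball_n n k); rewrite ?(subzn hkk); lia.
Qed.

Lemma count_zero : (5 * t * t * t * t <= count (fun g => (g != he) && (kappa g == 0%R)) (ball n))%N.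
Proof.
rewrite -(idx_size t); apply: (@count_lb _ _ _ (fzero t)); first exact: idx_uniq.
- move=> [[[k x] y] j] [[[k' x'] y'] j'] /idx_mem [hk hx hy hj] /idx_mem [hk' hx' hy' hj'] /= [ex ey ez].
  have ekk : k = k' by apply: (@zinj k k' (2 * t + j)%:Z (2 * t + j')%:Z); lia.
  subst k'; congr (_, _, _, _); lia.
- move=> [[[k x] y] j] /idx_mem [hk hx hy hj] /=.
  have [hp _] := @region_zero t k x y j ht ltac:(lia) ltac:(lia) ltac:(lia) ltac:(lia) ltac:(lia) ltac:(lia) ltac:(lia).
  rewrite hp eqxx he_neq ?andbT; last lia.
  have hkk : (k <= k * k)%N by nia.
  apply: (@in_ball_n n k); rewrite ?(subzn hkk); lia.
Qed.

End Counts.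

Definition Cn : nat := locked (27 * (160 * 160 * 160 * 160))%N.

Lemma Cn_gt0 : (0 < Cn)%N.
Proof. by rewrite /Cn -lock !muln_gt0. Qed.

Lemma key n c : (80 <= n)%N -> (5 * (n %/ 80) * (n %/ 80) * (n %/ 80) * (n %/ 80) <= c)%N ->
  (5 * size (ball n) <= Cn * c)%N.
Proof.
move=> hn hc.
set t := (n %/ 80)%N in hc.
have ht : (n <= 160 * t)%N by rewrite /t; lia.
have h1 := size_ball n.
have h2 : ((2 * n + 1) * (2 * n + 1) <= 9 * (n * n))%N by nia.
have h3 : ((2 * (n * n) + 1) <= 3 * (n * n))%N by nia.
have h4 : (size (ball n) <= 27 * (n * n * (n * n)))%N.
  apply: (leq_trans h1).
  have -> : (27 * (n * n * (n * n)) = (9 * (n * n)) * (3 * (n * n)))%N by ring.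
  exact: leq_mul.
have h5 : (n * n <= (160 * t) * (160 * t))%N by apply: leq_mul.
have h6 : (n * n * (n * n) <= (160 * t) * (160 * t) * ((160 * t) * (160 * t)))%N by apply: leq_mul.
have h7 : (27 * ((160 * t) * (160 * t) * ((160 * t) * (160 * t))) = Cn * (t * t * t * t))%N.
  by rewrite /Cn -lock; move: 160%N 27%N => a b; ring.
have h8 : (Cn * (5 * t * t * t * t) <= Cn * c)%N by rewrite leq_mul2l hc orbT.
have h9 : (5 * size (ball n) <= 5 * (27 * (n * n * (n * n))))%N by rewrite leq_mul2l h4 orbT.
have h10 : (27 * (n * n * (n * n)) <= 27 * ((160 * t) * (160 * t) * ((160 * t) * (160 * t))))%N.
  by rewrite leq_mul2l h6 orbT.
apply: (leq_trans h9); apply: leq_trans h8.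
have -> : (Cn * (5 * t * t * t * t) = 5 * (Cn * (t * t * t * t)))%N.
  by move: Cn 5%N => a b; ring.
by rewrite -h7 leq_mul2l h10 orbT.
Qed.

Lemma prop_ge (P : rat -> bool) n :
  (5 * size (ball n) <= Cn * count (fun g => (g != he) && P (kappa g)) (ball n))%N ->
  (0 < size (ball n))%N -> 5%:R / Cn%:R <= propBall P n.
Proof.
move=> h hs; have hC : (0 < Cn%:R :> rat) by rewrite ltr0n Cn_gt0.
have hS : (0 < (size (ball n))%:R :> rat) by rewrite ltr0n.
rewrite /propBall (ler_pdivlMr _ _ hS) mulrAC (ler_pdivrMr _ _ hC).
rewrite -!natrM ler_nat [X in (_ <= X)%N]mulnC; exact: h.
Qed.

Lemma prop_sum n : (0 < size (ball n))%N ->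
  propBall (fun k => k == 0) n + propBall (fun k => 0 < k) n + propBall (fun k => k < 0) n <= 1.
Proof.
move=> hs; rewrite /propBall -!mulrDl ler_pdivrMr ?ltr0n // mul1r -!natrD ler_nat.
apply: count3 => g; case: (g != he) => //=; case: ltgtP. all: try done.
Qed.


Close Scope ring_scope.

Theorem mainTheorem6 :
  exists eps : rat, (0 < eps)%R /\
  exists N : nat, forall n : nat, (N <= n)%N ->
    [/\ (eps < propBall (fun k => k == 0%R) n < 1 - eps)%R,
        (eps < propBall (fun k => 0 < k)%R n < 1 - eps)%R &
        (eps < propBall (fun k => k < 0)%R n < 1 - eps)%R].
Proof.
have e0 : (0 < 5%:R / Cn%:R :> rat)%R by apply: divr_gt0; rewrite ltr0n ?Cn_gt0.
exists ((5%:R / Cn%:R) / 2)%R; split; first by lra.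
exists 80%N => n hn.
set t := (n %/ 80)%N.
have ht : (1 <= t)%N by rewrite /t; lia.
have htn : (80 * t <= n)%N by rewrite /t; lia.
have hs : (0 < size (ball n))%N.
  have : he \in ball n by rewrite mem_undup; apply: (@ballList_mono 0).
  by case: (ball n).
have p0 := @prop_ge (fun k => k == 0%R) n (@key n _ hn (@count_zero n t ht htn)) hs.
have p1 := @prop_ge (fun k => (0 < k)%R) n (@key n _ hn (@count_pos n t ht htn)) hs.
have p2 := @prop_ge (fun k => (k < 0)%R) n (@key n _ hn (@count_neg n t ht htn)) hs.
have psum := @prop_sum n hs.
move: p0 p1 p2 psum e0.
set a := propBall _ n; set b := propBall _ n; set c := propBall _ n; set e := (5%:R / Cn%:R)%R.
move=> p0 p1 p2 psum e0.
split; apply/andP; split; lra.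
Qed.
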